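(* Let $(a_1,a_2)\in C$ and let $X$ be the AR(2)-process with coefficients $a_1,a_2$. Assume that $\mathbb{P}(Y_1<0)>0$ and that $\mathbb{P}(Y_1\ge x)\precsim(\log x)^{-\alpha}$ as $x\to\infty$ for some $\alpha>1$. Then for every $x\ge0$, $$\mathbb{P}\Big(\sup_{n\ge1}X_n\le x\Big)=\lim_{N\to\infty}p_N(x)>0 .$$
   Context: Let $(Y_n)_{n\ge1}$ be i.i.d. nondegenerate real random variables. The AR(2)-process is $X_n=a_1X_{n-1}+a_2X_{n-2}+Y_n$ for $n\ge1$ with $X_n=0$ for $n\le0$; $p_N(x):=\mathbb{P}(\sup_{n=1,\dots,N}X_n\le x)$. The region $C:=\{a_1\ge2,\ a_1^2+4a_2>0\}\cup\{a_1\in(0,2),\ a_1+a_2>1\}\cup\{a_1^2+4a_2=0,\ a_1>2\}\cup\{a_1=0,\ a_2>1\}$. $f\precsim g$ means $\limsup f/g<\infty$. *)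

(* Defs.v *)
From HB Require Import structures.
From mathcomp Require Import all_boot all_order all_algebra.
From mathcomp Require Import all_classical all_reals all_analysis.
Set Implicit Arguments. Unset Strict Implicit. Unset Printing Implicit Defensive.
Import Order.TTheory GRing.Theory Num.Theory.
Local Open Scope classical_set_scope.
Local Open Scope ring_scope.

(* Convention: Y k (k : nat, starting at 0) is the paper's Y_{k+1}. *)

Definition mutually_independent_rvs d (T : measurableType d) (R : realType)
  (P : probability T R) (Y : nat -> T -> R) : Prop :=
  forall (s : seq nat) (B : nat -> set R), uniq s ->
    (forall i, measurable (B i)) ->
    P [set t | forall i, i \in s -> B i (Y i t)] =
    (\big[*%E/1%E]_(i <- s) P (Y i @^-1` B i))%E.

Definition identically_distributed d (T : measurableType d) (R : realType)
  (P : probability T R) (Y : nat -> T -> R) : Prop :=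
  forall (n : nat) (B : set R), measurable B ->
    P (Y n @^-1` B) = P (Y 0%N @^-1` B).

Definition iid_rvs d (T : measurableType d) (R : realType)
  (P : probability T R) (Y : nat -> T -> R) : Prop :=
  (forall n, measurable_fun setT (Y n)) /\
  mutually_independent_rvs P Y /\ identically_distributed P Y.

Definition nondegenerate_rv d (T : measurableType d) (R : realType)
  (P : probability T R) (Z : T -> R) : Prop :=
  forall c : R, (P (Z @^-1` [set c]) < 1)%E.

(* AR(2) process: ar2 a1 a2 Y n = X_n, with X_0 = 0 (and X_{-1} = 0),
   X_1 = Y_1, X_{n+2} = a1 X_{n+1} + a2 X_n + Y_{n+2}. *)
Fixpoint ar2_aux (R : realType) (a1 a2 : R) (Y : nat -> R) (n : nat) : R * R :=
  (* returns (X_n, X_{n+1}) *)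
  match n with
  | 0%N => (0, Y 0%N)
  | n'.+1 => let p := ar2_aux a1 a2 Y n' in
             (p.2, a1 * p.2 + a2 * p.1 + Y n'.+1)
  end.

Definition ar2 (R : realType) (a1 a2 : R) (Y : nat -> R) (n : nat) : R :=
  (ar2_aux a1 a2 Y n).1.

Definition region_C (R : realType) (a1 a2 : R) : Prop :=
  (2 <= a1 /\ 0 < a1 ^+ 2 + 4 * a2) \/
  (0 < a1 < 2 /\ 1 < a1 + a2) \/
  (a1 ^+ 2 + 4 * a2 = 0 /\ 2 < a1) \/
  (a1 = 0 /\ 1 < a2).

Definition pN d (T : measurableType d) (R : realType) (P : probability T R)
  (a1 a2 : R) (Y : nat -> T -> R) (N : nat) (x : R) : \bar R :=
  P [set t | forall n : nat, (1 <= n <= N)%N -> ar2 a1 a2 (Y ^~ t) n <= x].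

(* Main.v *)
Require Import Defs.
From HB Require Import structures.
From mathcomp Require Import all_boot all_order all_algebra.
From mathcomp Require Import all_classical all_reals all_analysis.
From mathcomp Require Import ring lra.
Import Order.TTheory GRing.Theory Num.Theory.
Local Open Scope classical_set_scope.
Local Open Scope ring_scope.
Section Det.
Variable R : realType.

Lemma ar2_SS (a1 a2 : R) (y : nat -> R) n :
  ar2 a1 a2 y n.+2 = a1 * ar2 a1 a2 y n.+1 + a2 * ar2 a1 a2 y n + y n.+1.
Proof. by []. Qed.

Lemma ar2_1 (a1 a2 : R) (y : nat -> R) : ar2 a1 a2 y 1 = y 0%N.
Proof. by []. Qed.

Lemma ar2_0 (a1 a2 : R) (y : nat -> R) : ar2 a1 a2 y 0 = 0.
Proof. by []. Qed.

Lemma detA (a1 a2 d : R) : 0 <= a1 -> 0 <= a2 -> 1 < a1 + a2 -> 0 < d ->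
  exists eta th : R, 0 < eta /\ 1 < th /\ forall y : nat -> R,
    y 0%N <= - d -> y 1%N <= - d ->
    (forall k, (2 <= k)%N -> y k <= eta * th ^+ k.+1) ->
    forall n, (1 <= n)%N -> ar2 a1 a2 y n <= 0.
Proof.
move=> a10 a20 s0 d0.
set s := a1 + a2 - 1.
have sp : 0 < s by rewrite /s; lra.
set t := s / (3 + s).
have tp : 0 < t by rewrite /t divr_gt0 //; lra.
have t3 : 3 * t < s.
  rewrite /t mulrA ltr_pdivrMr; last lra.
  nra.
have t1 : t <= 1.
  rewrite /t ler_pdivrMr; last lra. lra.
set th := 1 + t.
set g := a1 * th + a2 - th ^+ 2.
have gp : 0 < g.
  rewrite /g /th expr2. rewrite /s in t3. nra.
have thp : 1 < th by rewrite /th; lra.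
have th0 : 0 < th by lra.
have thn : th != 0 by rewrite gt_eqF.
set k := d / th ^+ 2.
have kp : 0 < k by rewrite /k divr_gt0 // exprn_gt0.
have etap : 0 < k * g / th ^+ 2.
  by apply: divr_gt0; [apply: mulr_gt0|apply: exprn_gt0].
exists (k * g / th ^+ 2); exists th; split => //.
split => // y y0 y1 yk.
have key : forall n, ar2 a1 a2 y n.+1 <= - k * th ^+ n.+1 /\
                     ar2 a1 a2 y n.+2 <= - k * th ^+ n.+2.
  elim=> [|n [IH1 IH2]].
    rewrite ar2_SS ar2_1 ar2_0 /k.
    have e1 : d / th ^+ 2 * th ^+ 2 = d.
      by rewrite divfK // expf_neq0.
    have e2 : d / th ^+ 2 * th = d / th.
      by rewrite expr2 invfM mulrA divfK.
    have e3 : d / th <= d.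
      by rewrite ler_pdivrMr // ler_peMr //; lra.
    split; rewrite ?expr1 mulNr ?e2 ?e1 -?expr2.
      lra.
    have : a1 * y 0%N <= 0 by nra.
    lra.
  split => //.
  rewrite ar2_SS.
  have ykn := yk n.+2 isT.
  set P := th ^+ n.+1 in IH1 IH2 ykn *.
  have Pp : 0 < P by rewrite /P exprn_gt0.
  have e1 : th ^+ n.+2 = th * P by rewrite exprS.
  have e2 : th ^+ n.+3 = th ^+ 2 * P by rewrite exprS exprS expr2 mulrA.
  rewrite e1 in IH2. rewrite e2 in ykn *.
  have e3 : k * g / th ^+ 2 * (th ^+ 2 * P) = k * g * P.
    by rewrite mulrA divfK // expf_neq0.
  rewrite e3 in ykn.
  have h1 : a1 * ar2 a1 a2 y n.+2 <= a1 * (- k * (th * P)) by rewrite ler_wpM2l.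
  have h2 : a2 * ar2 a1 a2 y n.+1 <= a2 * (- k * P) by rewrite ler_wpM2l.
  have : - k * (th ^+ 2 * P) = a1 * (- k * (th * P)) + a2 * (- k * P) + k * g * P.
    by rewrite /g; ring.
  lra.
case=> // n _.
have [h _] := key n.
have : 0 < k * th ^+ n.+1 by rewrite mulr_gt0 // exprn_gt0.
lra.
Qed.


Lemma detB (r1 r2 d : R) : 1 < r1 -> 0 <= r2 -> 0 < d ->
  exists eta th : R, 0 < eta /\ 1 < th /\ forall y : nat -> R,
    y 0%N <= - d -> y 1%N <= - d ->
    (forall k, (2 <= k)%N -> y k <= eta * th ^+ k.+1) ->
    forall n, (1 <= n)%N -> ar2 (r1 + r2) (- (r1 * r2)) y n <= 0.
Proof.
move=> r11 r20 d0.
set th := (1 + r1) / 2.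
have thp : 1 < th by rewrite /th; lra.
have thr : th < r1 by rewrite /th; lra.
have th0 : 0 < th by lra.
have thn : th != 0 by rewrite gt_eqF.
set k := d / th.
have kp : 0 < k by rewrite /k divr_gt0.
have etap : 0 < k * (r1 - th) / th.
  by apply: divr_gt0 => //; apply: mulr_gt0 => //; lra.
exists (k * (r1 - th) / th); exists th; split => //; split => // y y0 y1 yk.
have kth : k * th = d by rewrite /k divfK.
have ybound : forall m, y m.+1 <= k * th ^+ m.+1 * (r1 - th).
  case=> [|m].
    have : 0 < k * th ^+ 1 * (r1 - th).
      by apply: mulr_gt0; [apply: mulr_gt0 => //; rewrite exprn_gt0|lra].
    lra.
  have := yk m.+2 isT.
  have -> : th ^+ m.+3 = th * th ^+ m.+2 by rewrite exprS.
  have -> : k * (r1 - th) / th * (th * th ^+ m.+2) = k * th ^+ m.+2 * (r1 - th).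
    by field.
  done.
set X := ar2 (r1 + r2) (- (r1 * r2)) y.
have key : forall n, X n.+1 <= 0 /\ X n.+1 - r2 * X n <= - k * th ^+ n.+1.
  elim=> [|n [IH1 IH2]].
    rewrite /X ar2_1 ar2_0 expr1 mulNr kth; lra.
  have rec : X n.+2 - r2 * X n.+1 = r1 * (X n.+1 - r2 * X n) + y n.+1.
    rewrite /X ar2_SS; ring.
  set P := th ^+ n.+1 in IH2 *.
  have Pp : 0 < P by rewrite /P exprn_gt0.
  have e1 : th ^+ n.+2 = th * P by rewrite exprS.
  have yb := ybound n; rewrite -/P in yb.
  have h1 : r1 * (X n.+1 - r2 * X n) <= r1 * (- k * P) by rewrite ler_wpM2l //; lra.
  have h2 : X n.+2 - r2 * X n.+1 <= - k * th ^+ n.+2.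
    rewrite e1. have : - k * (th * P) = r1 * (- k * P) + k * P * (r1 - th) by ring.
    lra.
  split => //.
  have : r2 * X n.+1 <= 0 by nra.
  have : 0 < k * th ^+ n.+2 by rewrite mulr_gt0 // exprn_gt0.
  lra.
case=> // n _.
by have [h _] := key n.
Qed.

Lemma det_bound (a1 a2 d : R) : region_C a1 a2 -> 0 < d ->
  exists eta th : R, 0 < eta /\ 1 < th /\ forall y : nat -> R,
    y 0%N <= - d -> y 1%N <= - d ->
    (forall k, (2 <= k)%N -> y k <= eta * th ^+ k.+1) ->
    forall n, (1 <= n)%N -> ar2 a1 a2 y n <= 0.
Proof.
move=> hC d0.
have a10 : 0 <= a1.
  case: hC => [[h _]|[[/andP[h _] _]|[[_ h]|[h _]]]]; lra.
have [a20|a20] := leP 0 a2.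
  apply: detA => //.
  case: hC => [[h _]|[[_ h]|[[h1 h2]|[_ h]]]]; try lra.
set D := a1 ^+ 2 + 4 * a2.
have D0 : 0 <= D.
  rewrite /D; case: hC => [[_ h]|[[/andP[h1 h2] h]|[[h1 h2]|[_ h]]]]; try lra.
  rewrite expr2; nra.
set sq := Num.sqrt D.
have sq0 : 0 <= sq by rewrite sqrtr_ge0.
have sq2 : sq ^+ 2 = D by rewrite sqr_sqrtr.
set r1 := (a1 + sq) / 2.
set r2 := (a1 - sq) / 2.
have r20 : 0 <= r2.
  have : sq <= a1.
    rewrite /D in sq2. rewrite expr2 in sq2. 
    have : sq * sq <= a1 * a1 by lra.
    nra.
  rewrite /r2; lra.
have r11 : 1 < r1.
  rewrite /r1; rewrite /D in sq2 *.
  case: hC => [[h1 h2]|[[/andP[h1 h2] h]|[[h1 h2]|[_ h]]]]; try lra.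
    have : 0 < sq by rewrite /sq sqrtr_gt0.
    lra.
  rewrite expr2 in sq2. rewrite expr2 in sq2.
  have : 2 - a1 < sq by nra.
  lra.
have e1 : a1 = r1 + r2 by rewrite /r1 /r2; field.
have e2 : a2 = - (r1 * r2).
  rewrite /r1 /r2 /D in sq2 *.
  have : (a1 + sq) / 2 * ((a1 - sq) / 2) = (a1 ^+ 2 - sq ^+ 2) / 4 by field.
  by move=> ->; rewrite sq2; field.
by have := @detB r1 r2 d r11 r20 d0; rewrite -e1 -e2.
Qed.

End Det.
Section Sum.
Variable R : realType.

Definition FF (b u : R) := expR (- b * ln u).

Lemma tele_step (b u : R) : 0 < b -> 1 < u ->
  b * expR (- (1 + b) * ln u) <= FF b (u - 1) - FF b u.
Proof.
move=> b0 u1.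
have u0 : 0 < u by lra.
have lu : 1 / u <= ln u - ln (u - 1).
  have e : u - 1 = u * (1 + (- (1 / u))) by field; rewrite gt_eqF.
  rewrite e lnM ?posrE //; last first.
    rewrite subr_gt0 ltr_pdivrMr // mul1r //.
  have : ln (1 + - (1 / u)) <= - (1 / u).
    apply: le_ln1Dx. rewrite ltrNl opprK ltr_pdivrMr // mul1r //.
  lra.
rewrite /FF.
have e1 : - b * ln (u - 1) = - b * ln u + b * (ln u - ln (u - 1)) by ring.
have e2 : - (1 + b) * ln u = - b * ln u + - ln u by ring.
rewrite e1 e2 !expRD expRN lnK ?posrE //.
have h := expR_ge1Dx (b * (ln u - ln (u - 1))).
have E0 := expR_gt0 (- b * ln u).
set E := expR (- b * ln u) in E0 *.
have H1 : b * (1 / u) <= b * (ln u - ln (u - 1)) by rewrite ler_wpM2l //; lra.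
have : E * (b * (1/u)) <= E * (b * (ln u - ln (u - 1))) by rewrite ler_wpM2l //; lra.
have -> : b * (E * u^-1) = E * (b * (1/u)) by rewrite mul1r; ring.
nra.
Qed.

Lemma FF_ge0 b u : 0 <= FF b u.
Proof. exact: expR_ge0. Qed.

Lemma tele_sum (b : R) (c n : nat) : 0 < b ->
  \sum_(k < n) b * expR (- (1 + b) * ln (c.+2 + k)%:R)
    <= FF b (c.+1)%:R - FF b (c.+1 + n)%:R.
Proof.
move=> b0; elim: n => [|n IH].
  by rewrite big_ord0 addn0 subrr.
rewrite big_ord_recr /=.
have := @tele_step b (c.+2 + n)%:R b0.
have -> : (c.+2 + n)%:R - 1 = (c.+1 + n)%:R :> R.
  by rewrite addSn -addn1 natrD; ring.
have -> : (c.+1 + n.+1)%N = (c.+2 + n)%N by rewrite addnS.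
move=> h.
have : 1 < (c.+2 + n)%:R :> R by rewrite ltr1n addSn.
move/h; lra.
Qed.

Lemma tele_sum' (b : R) (c n : nat) : 0 < b ->
  \sum_(k < n) b * expR (- (1 + b) * ln (c.+2 + k)%:R) <= FF b (c.+1)%:R.
Proof.
move=> b0; have := @tele_sum b c n b0; have := FF_ge0 b (c.+1 + n)%:R; lra.
Qed.

Lemma prod_lb (p : nat -> R) (p0 : R) (K0 : nat) :
  0 < p0 -> (forall k, p0 <= p k <= 1) ->
  (forall N, \sum_(K0 <= k < N) (1 - p k) <= 2^-1) ->
  forall N, p0 ^+ K0 / 2 <= \prod_(k < N) p k.
Proof.
move=> p00 hp hs.
have p01 : p0 <= 1 by have /andP[h1 h2] := hp 0%N; lra.
suff H : forall N, p0 ^+ (minn N K0) * (1 - \sum_(K0 <= k < N) (1 - p k))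
                   <= \prod_(k < N) p k.
  move=> N; apply: le_trans (H N).
  have h1 : p0 ^+ K0 <= p0 ^+ minn N K0.
    by rewrite ler_wiXn2l // ?geq_minr //; lra.
  have h2 := hs N.
  have h3 : 0 <= p0 ^+ K0 by rewrite exprn_ge0 //; lra.
  have h4 : 1 / 2 <= 1 - \sum_(K0 <= k < N) (1 - p k) by lra.
  nra.
elim=> [|N IH].
  rewrite big_ord0 big_geq // subr0 mulr1; rewrite min0n. by rewrite expr0.
rewrite big_ord_recr /=.
have /andP[pN1 pN2] := hp N.
have P0 : 0 <= \prod_(k < N) p k.
  by apply: prodr_ge0 => i _; have /andP[h _] := hp i; lra.
case: (leqP K0 N) => hK.
  rewrite big_nat_recr //=.
  have -> : minn N.+1 K0 = minn N K0 by rewrite !(minn_idPr _) // ltnW.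
  set S := \sum_(K0 <= k < N) (1 - p k) in IH *.
  have S0 : 0 <= S by apply: sumr_ge0 => i _; have /andP[h1 h2] := hp i; lra.
  set A := p0 ^+ minn N K0 in IH *.
  have A0 : 0 <= A by rewrite exprn_ge0 //; lra.
  have pN0 : 0 <= p N by lra.
  have h := ler_wpM2r pN0 IH.
  have h2 : 0 <= A * S * (1 - p N) by rewrite mulr_ge0 ?mulr_ge0 //; lra.
  have -> : A * (1 - (S + (1 - p N))) = A * (1 - S) * p N - A * S * (1 - p N) by ring.
  lra.
have e1 : \sum_(K0 <= k < N) (1 - p k) = 0 by rewrite big_geq // ltnW.
have e2 : \sum_(K0 <= k < N.+1) (1 - p k) = 0 by rewrite big_geq.
rewrite e1 subr0 mulr1 in IH; rewrite e2 subr0 mulr1.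
have m1 : minn N K0 = N by apply/minn_idPl; exact: ltnW.
have m2 : minn N.+1 K0 = N.+1 by apply/minn_idPl.
rewrite m1 in IH; rewrite m2 exprSr.
have A0 : 0 <= p0 ^+ N by rewrite exprn_ge0 //; lra.
have h := ler_wpM2r (x := p N) ltac:(lra) IH.
have h2 := ler_wpM2l A0 pN1.
lra.
Qed.

Lemma ln_b (eta th : R) (n : nat) : 0 < eta -> 0 < th ->
  ln (eta * th ^+ n) = ln eta + n%:R * ln th.
Proof.
move=> e0 t0; rewrite lnM ?posrE ?exprn_gt0 // lnXn // mulr_natl //.
Qed.

Lemma tail_bound (eta th M x0 al : R) (q : nat -> R) :
  0 < eta -> 1 < th -> 1 < al ->
  (forall k, x0 <= eta * th ^+ k.+1 ->
     q k <= M * powR (ln (eta * th ^+ k.+1)) (- al)) ->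
  exists K0, (2 <= K0)%N /\ forall N, \sum_(K0 <= k < N) q k <= 2^-1.
Proof.
move=> e0 t1 a1 hq.
set L := ln th.
have L0 : 0 < L by rewrite /L ln_gt0.
have t0 : 0 < th by lra.
set be := al - 1.
have be0 : 0 < be by rewrite /be; lra.
set C := `|M| * expR (- al * ln L).
have C0 : 0 <= C by rewrite /C mulr_ge0 // expR_ge0.
set t := Num.truncn (`|ln eta| / L).
set z1 := - ln (be / (2 * (C + 1))) / be.
set z2 := ln (`|x0| + 1) / L.
set c := (Num.truncn (expR z1) + Num.truncn z2)%N.
have hc1 : expR z1 < c.+1%:R.
  apply: lt_le_trans (truncnS_gt (expR z1)) _.
  by rewrite ler_nat ltnS leq_addr.
have hc2 : z2 < c.+1%:R.
  apply: lt_le_trans (truncnS_gt z2) _.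
  by rewrite ler_nat ltnS leq_addl.
clearbody c.
exists (t.+2 + c)%N; split; first by rewrite addSn ltnS ltnS leq0n.
have hT : `|ln eta| / L < t.+1%:R by apply: truncnS_gt.
clearbody t.
have hlne : 0 <= ln eta + t.+1%:R * L.
  have : `|ln eta| < t.+1%:R * L by rewrite -ltr_pdivrMr.
  have := ler_norm (- ln eta); rewrite normrN.
  lra.
have key : forall j : nat,
    (c.+2 + j)%:R * L <= ln (eta * th ^+ (j + (t.+2 + c)).+1).
  move=> j; rewrite ln_b // -/L.
  have -> : (j + (t.+2 + c)).+1%:R = (c.+2 + j)%:R + t.+1%:R :> R.
    by rewrite -natrD; congr (_%:R); rewrite !(addSn, addnS); congr (_.+3); ring.
  lra.
have mpos : forall j : nat, 0 < (c.+2 + j)%:R :> R by move=> j; rewrite ltr0n addSn.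
have qb : forall j : nat, q (j + (t.+2 + c))%N <=
    C * expR (- (1 + be) * ln (c.+2 + j)%:R).
  move=> j.
  set b := eta * th ^+ (j + (t.+2 + c)).+1.
  have b0 : 0 < b by rewrite /b mulr_gt0 // exprn_gt0.
  have kj := key j; rewrite -/b in kj.
  have lnb0 : 0 < (c.+2 + j)%:R * L by rewrite mulr_gt0.
  have lnbp : 0 < ln b by lra.
  have xb : x0 <= b.
    have : ln (`|x0| + 1) < ln b.
      have : ln (`|x0| + 1) = z2 * L by rewrite /z2 divfK // gt_eqF.
      move=> ->.
      have : z2 * L < c.+1%:R * L by rewrite ltr_pM2r.
      have : c.+1%:R * L <= (c.+2 + j)%:R * L.
        by rewrite ler_pM2r // ler_nat addSn ltnS ltnW // ltnS leq_addr.
      lra.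
    have n0 := normr_ge0 x0.
    have hx1 : 0 < `|x0| + 1 by lra.
    move=> hl.
    have : `|x0| + 1 < b by move: hl; rewrite ltr_ln ?posrE.
    have := ler_norm x0; lra.
  apply: le_trans (hq _ xb) _.
  have pw : powR (ln b) (- al) <= expR (- al * ln L) * expR (- (1 + be) * ln (c.+2 + j)%:R).
    rewrite /powR gt_eqF // -expRD.
    have -> : 1 + be = al by rewrite /be; ring.
    rewrite ler_expR.
    have h1 : ln ((c.+2 + j)%:R * L) <= ln (ln b) by rewrite ler_ln ?posrE.
    rewrite lnM ?posrE // in h1.
    have : - al * ln (ln b) <= - al * (ln (c.+2 + j)%:R + ln L).
      rewrite !mulNr lerN2 ler_pM2l //; lra.
    lra.
  have pw0 : 0 <= powR (ln b) (- al) by apply: powR_ge0.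
  have : M * powR (ln b) (- al) <= `|M| * powR (ln b) (- al).
    by rewrite ler_wpM2r // ler_norm.
  have : `|M| * powR (ln b) (- al) <= `|M| * (expR (- al * ln L) *
            expR (- (1 + be) * ln (c.+2 + j)%:R)) by rewrite ler_wpM2l.
  rewrite /C mulrA; lra.
move=> N.
case: (leqP N (t.+2 + c)) => hN.
  by rewrite big_geq // invr_ge0; lra.
rewrite -[X in \sum_(X <= _ < _) _]add0n big_addn big_mkord.
set n := (N - (t.+2 + c))%N.
apply: le_trans; first by apply: ler_sum => j _; exact: (qb j).
have hts := @tele_sum' be c n be0.
have : \sum_(i < n) C * expR (- (1 + be) * ln (c.+2 + i)%:R) =
       C / be * \sum_(i < n) be * expR (- (1 + be) * ln (c.+2 + i)%:R).
  rewrite mulr_sumr; apply: eq_bigr => i _; by rewrite mulrA divfK // gt_eqF.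
move=> ->.
have hF : FF be c.+1%:R <= be / (2 * (C + 1)).
  rewrite /FF.
  have hz : z1 < ln c.+1%:R.
    by rewrite -(expRK z1) ltr_ln ?posrE ?expR_gt0 ?ltr0n.
  have : - be * ln c.+1%:R <= ln (be / (2 * (C + 1))).
    have : ln (be / (2 * (C + 1))) = - be * z1 by rewrite /z1; field; rewrite gt_eqF.
    move=> ->; rewrite !mulNr lerN2 ler_pM2l //; exact: ltW.
  have Cp : 0 < 2 * (C + 1) by apply: mulr_gt0; lra.
  have e : expR (ln (be / (2 * (C + 1)))) = be / (2 * (C + 1)).
    by rewrite lnK // posrE divr_gt0.
  by move=> H; rewrite -e ler_expR.
have hCb : 0 <= C / be by rewrite divr_ge0 //; lra.
have : C / be * \sum_(i < n) be * expR (- (1 + be) * ln (c.+2 + i)%:R) <=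
       C / be * (be / (2 * (C + 1))).
  by rewrite ler_wpM2l //; apply: le_trans hts hF.
have : C / be * (be / (2 * (C + 1))) = C / (2 * (C + 1)) by field; rewrite ?gt_eqF //; lra.
have : C / (2 * (C + 1)) <= 2^-1.
  rewrite ler_pdivrMr ?mulr_gt0 //; last lra. lra.
lra.
Qed.

End Sum.
Section Prob.
Context {d : measure_display} {T : measurableType d} {R : realType}.
Variable (P : probability T R).

Lemma meas_le (f : T -> R) (x : R) : measurable_fun setT f ->
  measurable [set t | f t <= x].
Proof.
move=> mf; have := mf measurableT _ (measurable_itv `]-oo, x]).
rewrite setTI.
suff -> : [set t | f t <= x] = f @^-1` `]-oo, x] by [].
by apply/seteqP; split => t /=; rewrite in_itv /=.
Qed.

Lemma meas_ar2 (a1 a2 : R) (Y : nat -> T -> R) :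
  (forall n, measurable_fun setT (Y n)) ->
  forall n, measurable_fun setT (fun t => ar2 a1 a2 (Y ^~ t) n).
Proof.
move=> mY.
suff H : forall n, measurable_fun setT (fun t => (ar2_aux a1 a2 (Y ^~ t) n).1) /\
                   measurable_fun setT (fun t => (ar2_aux a1 a2 (Y ^~ t) n).2).
  by move=> n; case: (H n).
elim=> [|n [IH1 IH2]] /=.
  by split; [exact: measurable_cst | exact: mY].
split => //.
apply: measurable_realfun.measurable_funD; last exact: mY.
apply: measurable_realfun.measurable_funD; apply: measurable_realfun.measurable_funM => //; exact: measurable_cst.
Qed.

Lemma meas_all (Q : pred nat) (F : nat -> set T) :
  (forall n, measurable (F n)) -> measurable [set t | forall n, Q n -> F n t].
Proof.
move=> mF.
have -> : [set t | forall n, Q n -> F n t] =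
          \bigcap_n (if Q n then F n else setT).
  apply/seteqP; split => t /=.
    by move=> h n _; case: ifPn => // /h.
  by move=> h n qn; have := h n I; rewrite qn.
apply: bigcapT_measurable => n; case: ifPn => // _; exact: measurableT.
Qed.

Lemma conv_part (a1 a2 : R) (Y : nat -> T -> R) (x : R) :
  (forall n, measurable_fun setT (Y n)) ->
  (pN P a1 a2 Y ^~ x) @ \oo -->
      P [set t | forall n : nat, (1 <= n)%N -> ar2 a1 a2 (Y ^~ t) n <= x].
Proof.
move=> mY.
set F := fun N => [set t | forall n : nat, (1 <= n <= N)%N -> ar2 a1 a2 (Y ^~ t) n <= x].
have mF : forall N, measurable (F N).
  move=> N; rewrite /F.
  have -> : [set t | forall n : nat, (1 <= n <= N)%N -> ar2 a1 a2 (Y ^~ t) n <= x]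
     = [set t | forall n, (fun n => (1 <= n <= N)%N) n ->
                 [set t | ar2 a1 a2 (Y ^~ t) n <= x] t] by [].
  apply: meas_all => n; apply: meas_le; exact: meas_ar2.
have eq : \bigcap_N F N = [set t | forall n : nat, (1 <= n)%N -> ar2 a1 a2 (Y ^~ t) n <= x].
  apply/seteqP; split => t /=.
    by move=> h n n1; apply: (h n I); rewrite n1 leqnn.
  by move=> h N _ n /andP[n1 _]; exact: h.
have mB : measurable (\bigcap_N F N) by apply: bigcapT_measurable.
have hom : {homo F : n m / (n <= m)%N >-> (m <= n)%O}.
  move=> n m nm; apply/subsetPset => t /= h k /andP[k1 km]; apply: h; rewrite k1 /=.
  exact: leq_trans km nm.
have fin : (P (F 0%N) < +oo)%E.
  by apply: (le_lt_trans (probability_le1 P (mF 0%N))); rewrite ltry.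
have := nonincreasing_cvg_mu fin mF mB hom.
by rewrite eq.
Qed.

Lemma neg_delta (Z : T -> R) : measurable_fun setT Z ->
  (0 < P [set t | (Z t < 0)%R])%E ->
  exists dl : R, 0 < dl /\ (0 < P [set t | (Z t <= - dl)%R])%E.
Proof.
move=> mZ hpos.
apply: contrapT => hne.
have H0 : forall dl : R, 0 < dl -> P [set t | Z t <= - dl] = 0%E.
  move=> dl dl0; apply/eqP; rewrite eq_le measure_ge0 andbT.
  rewrite leNgt; apply/negP => h; apply: hne; exists dl; split => //.
set G := fun m : nat => [set t | Z t <= - (m.+1%:R)^-1].
have mG : forall m, measurable (G m) by move=> m; exact: meas_le.
have eqU : \bigcup_m G m = [set t | Z t < 0].
  apply/seteqP; split => t /=.
    case=> m _ /=; rewrite /G /= => h.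
    apply: le_lt_trans h _; rewrite oppr_lt0 invr_gt0 ltr0n //.
  move=> zt.
  have zp : 0 < - Z t by lra.
  exists (Num.truncn ((- Z t)^-1)) => //=.
  rewrite /G /=.
  have h := truncnS_gt ((- Z t)^-1).
  set m := (Num.truncn _).+1%:R in h *.
  have m0 : 0 < m by apply: lt_trans h; rewrite invr_gt0.
  have : m^-1 <= - Z t.
    rewrite -(invrK (- Z t)) lef_pV2 ?posrE ?invr_gt0 //; exact: ltW.
  by rewrite lerNr.
have mU : measurable (\bigcup_m G m) by apply: bigcupT_measurable.
have hom : {homo G : n m / (n <= m)%N >-> (n <= m)%O}.
  move=> n m nm; apply/subsetPset => t; rewrite /G /= => h.
  apply: le_trans h _; rewrite lerN2 lef_pV2 ?posrE ?ltr0n // ler_nat ltnS //.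
have hc := nondecreasing_cvg_mu (mu := P) mG mU hom.
have hc0 : (fun m => P (G m)) @ \oo --> (0%E : \bar R).
  rewrite (_ : (fun m => P (G m)) = fun=> 0%E); first exact: cvg_cst.
  apply/funext => m /=; apply: H0; rewrite invr_gt0 ltr0n //.
have e : P (\bigcup_n G n) = 0%E by apply: (cvg_unique _ hc hc0).
by move: hpos; rewrite -eqU e ltxx.
Qed.

Lemma mpre (f : T -> R) (B : set R) : measurable_fun setT f -> measurable B ->
  measurable (f @^-1` B).
Proof. by move=> mf mB; have := mf measurableT B mB; rewrite setTI. Qed.

Lemma Pfin (A : set T) : measurable A -> P A \is a fin_num.
Proof.
move=> mA; rewrite ge0_fin_numE ?measure_ge0 //.
by apply: le_lt_trans (probability_le1 P mA) _; rewrite ltry.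
Qed.

Lemma prodE (Y : nat -> T -> R) (b : nat -> R) : iid_rvs P Y -> forall N,
  P [set t | forall k, (k < N)%N -> Y k t <= b k] =
  (\prod_(k < N) fine (P (Y 0%N @^-1` [set` `]-oo, b k]])))%:E.
Proof.
move=> [mY [ind idd]] N.
have h := ind (index_iota 0 N) (fun i => [set` `]-oo, b i]]) (iota_uniq _ _)
              (fun i => measurable_itv _).
have -> : [set t | forall k, (k < N)%N -> Y k t <= b k] =
          [set t | forall i, i \in index_iota 0 N -> [set` `]-oo, b i]] (Y i t)].
  apply/seteqP; split => t /= H i.
    by rewrite mem_index_iota /= in_itv /= => /H.
  by move=> iN; have := H i; rewrite mem_index_iota /= in_itv /=; apply.
rewrite h big_mkord -prodEFin.
apply: eq_bigr => i _.
rewrite idd ?fineK //.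
apply: Pfin; apply: mpre; [exact: mY | exact: measurable_itv].
Qed.

End Prob.

Theorem theorem1p3 (d : measure_display) (T : measurableType d) (R : realType)
  (P : probability T R) (Y : nat -> T -> R) (a1 a2 : R) :
  iid_rvs P Y ->
  nondegenerate_rv P (Y 0%N) ->
  region_C a1 a2 ->
  (0 < P [set t | (Y 0%N t < 0)%R])%E ->
  (exists alpha : R, 1 < alpha /\
     exists M x0 : R, forall x : R, x0 <= x ->
       fine (P [set t | x <= Y 0%N t]) <= M * (ln x) `^ (- alpha)) ->
  forall x : R, 0 <= x ->
    (pN P a1 a2 Y ^~ x) @ \oo -->
      P [set t | forall n : nat, (1 <= n)%N -> ar2 a1 a2 (Y ^~ t) n <= x] /\
    (0 < P [set t | forall n : nat, (1 <= n)%N -> (ar2 a1 a2 (Y ^~ t) n <= x)%R])%E.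
Proof.
move=> hiid _ hC hneg [al [al1 [M [x0 hM]]]] x xge0.
have [mY [ind idd]] := hiid.
split; first exact: conv_part.
have [dl [dl0 hdl]] := neg_delta P (Y 0%N) (mY 0%N) hneg.
have [eta [th [eta0 [th1 hdet]]]] := @det_bound R a1 a2 dl hC dl0.
set b := fun k : nat => if (k < 2)%N then - dl else eta * th ^+ k.+1.
have bge : forall k, - dl <= b k.
  move=> k; rewrite /b; case: ifP => _ //.
  have : 0 < eta * th ^+ k.+1 by rewrite mulr_gt0 // exprn_gt0 //; lra.
  lra.
set A := fun k => Y 0%N @^-1` [set` `]-oo, b k]].
have mA : forall k, measurable (A k).
  by move=> k; apply: mpre => //; exact: measurable_itv.
set p := fun k => fine (P (A k)).
have pE : forall k, P (A k) = (p k)%:E by move=> k; rewrite /p fineK //; exact: Pfin.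
set p0 := fine (P [set t | Y 0%N t <= - dl]).
have mD : measurable [set t | Y 0%N t <= - dl] by exact: meas_le.
have p00 : 0 < p0.
  apply: fine_gt0; rewrite hdl /=.
  by apply: le_lt_trans (probability_le1 P mD) _; rewrite ltry.
have hp : forall k, p0 <= p k <= 1.
  move=> k; apply/andP; split.
    rewrite /p0 /p; apply: fine_le; try exact: Pfin.
    apply: le_measure; rewrite ?inE //.
    move=> t /= h; rewrite /A /preimage /= in_itv /=; exact: le_trans h (bge k).
  have := probability_le1 P (mA k); rewrite pE lee_fin //.
set q := fun k : nat => if (k < 2)%N then 0 else 1 - p k.
have hq : forall k, x0 <= eta * th ^+ k.+1 ->
     q k <= M * powR (ln (eta * th ^+ k.+1)) (- al).
  move=> k xk.
  have h := hM _ xk.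
  have mS : measurable [set t | eta * th ^+ k.+1 <= Y 0%N t].
    have -> : [set t | eta * th ^+ k.+1 <= Y 0%N t] =
              Y 0%N @^-1` [set` `[eta * th ^+ k.+1, +oo[].
      by apply/seteqP; split => t /=; rewrite in_itv /= andbT.
    apply: mpre => //; exact: measurable_itv.
  have f0 : 0 <= fine (P [set t | eta * th ^+ k.+1 <= Y 0%N t]).
    by apply: fine_ge0; exact: measure_ge0.
  rewrite /q; case: ifP => k2; first lra.
  apply: le_trans h.
  have hc := probability_setC P (mA k).
  rewrite pE in hc.
  have e : 1 - p k = fine (P (~` A k)) by rewrite hc.
  rewrite e; apply: fine_le; [apply: Pfin; exact: measurableC | exact: Pfin |].
  apply: le_measure; rewrite ?inE //; first exact: measurableC.
  move=> t /=; rewrite /A /b k2 /= in_itv /= => /negP; rewrite -ltNge; exact: ltW.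
have [K0 [K02 hsum]] := @tail_bound R eta th M x0 al q eta0 th1 al1 hq.
have hsum' : forall N, \sum_(K0 <= k < N) (1 - p k) <= 2^-1.
  move=> N; apply: le_trans (hsum N); rewrite le_eqVlt; apply/orP; left; apply/eqP.
  apply: eq_big_nat => k /andP[k1 _]; rewrite /q.
  by have -> : (k < 2)%N = false by apply/negP => h; move: (leq_trans K02 k1); rewrite leqNgt h.
have hprod := @prod_lb R p p0 K0 p00 hp hsum'.
set cc := p0 ^+ K0 / 2.
have cc0 : 0 < cc by rewrite /cc divr_gt0 // exprn_gt0.
set E := fun N => [set t | forall k, (k < N)%N -> Y k t <= b k].
have PE : forall N, P (E N) = (\prod_(k < N) p k)%:E by move=> N; exact: prodE.
have mE : forall N, measurable (E N).
  move=> N; rewrite /E.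
  have -> : [set t | forall k, (k < N)%N -> Y k t <= b k] =
     [set t | forall n, (fun n => (n < N)%N) n -> [set t | Y n t <= b n] t] by [].
  apply: meas_all => n; exact: meas_le.
have mEi : measurable (\bigcap_N E N) by apply: bigcapT_measurable.
have hom : {homo E : n m / (n <= m)%N >-> (m <= n)%O}.
  move=> n m nm; apply/subsetPset => t /= h k km; apply: h.
  exact: leq_trans km nm.
have fin : (P (E 0%N) < +oo)%E.
  by apply: (le_lt_trans (probability_le1 P (mE 0%N))); rewrite ltry.
have hc := nonincreasing_cvg_mu (mu := P) fin mE mEi hom.
have hlim : (cc%:E <= lim ((P \o E) x @[x --> \oo]))%E.
  apply: lime_ge; first exact: cvgP hc.
  by apply: nearW => N /=; rewrite PE lee_fin.
rewrite (cvg_lim (@ereal_hausdorff R) hc) in hlim.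
have mT : measurable [set t | forall n : nat, (1 <= n)%N -> ar2 a1 a2 (Y ^~ t) n <= x].
  have -> : [set t | forall n : nat, (1 <= n)%N -> ar2 a1 a2 (Y ^~ t) n <= x]
     = [set t | forall n, (fun n => (1 <= n)%N) n ->
                 [set t | ar2 a1 a2 (Y ^~ t) n <= x] t] by [].
  apply: meas_all => n; apply: meas_le; exact: meas_ar2.
have sub : \bigcap_N E N `<=` [set t | forall n : nat, (1 <= n)%N -> ar2 a1 a2 (Y ^~ t) n <= x].
  move=> t /= h n n1.
  have hk : forall k, Y k t <= b k by move=> k; apply: (h k.+1 I); exact: ltnSn.
  apply: le_trans xge0.
  apply: hdet => //.
  by move=> k k2; have := hk k; rewrite /b ltnNge k2.
have h1 : (0 < cc%:E)%E by rewrite lte_fin.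
apply: lt_le_trans h1 _; apply: le_trans hlim _.
by apply: le_measure; rewrite ?inE.
Qed.
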